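(* For an integer $j\ge 2$ let $\bar\alpha_j$ be the largest $\alpha\ge 0$ such that $\left(1-e^{-\alpha^{j-1}x^{j-1}}\right)^{j-1}\le x$ for all $x\in(0,1]$, and for $\delta\in(0,1)$ let $\gamma_0(j,\delta)=\bar\alpha_j^{-(j-1)/j}\,j\,\delta^{-1/j}$. Then for every $\delta\in(0,e^{-1})$, choosing $j=\lceil\ln(1/\delta)\rceil$ gives $$\gamma_0(j,\delta)\le e\,\left\lceil \ln\tfrac{1}{\delta}\right\rceil .$$
   Context: $\gamma_0(j,\delta)$ is the minimum oversampling ratio (number of measurements divided by number of nonzero signal entries) for LM1 reconstruction with $(j,k)$-regular LDPC measurement matrices at sparsity fraction $\delta$. *)

(* Defs.v *)
From Stdlib Require Import Reals.
Open Scope R_scope.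

Definition alpha_admissible (j : nat) (alpha : R) : Prop :=
  0 <= alpha /\
  forall x : R, 0 < x <= 1 ->
    (1 - exp (- (alpha ^ (j - 1) * x ^ (j - 1)))) ^ (j - 1) <= x.

Definition is_alpha_bar (j : nat) (abar : R) : Prop :=
  alpha_admissible j abar /\ (forall alpha, alpha_admissible j alpha -> alpha <= abar).

Definition gamma0 (j : nat) (abar delta : R) : R :=
  Rpower abar (- (INR j - 1) / INR j) * INR j * Rpower delta (- 1 / INR j).

(* Main.v *)
Require Import Defs.
From Stdlib Require Import Reals Lra Lia.
Open Scope R_scope.

Lemma pow_le_self (x : R) (n : nat) : 0 <= x <= 1 -> (1 <= n)%nat -> x ^ n <= x.
Proof.
  intros Hx Hn. induction n as [|n IH]; [lia|].
  destruct n as [|n]. simpl; lra.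
  assert (H := IH ltac:(lia)). change (x ^ S (S n)) with (x * x ^ S n).
  assert (0 <= x ^ S n) by (apply pow_le; lra).
  nra.
Qed.

Lemma one_admissible (j : nat) : (2 <= j)%nat -> alpha_admissible j 1.
Proof.
  intros Hj. split; [lra|]. intros x Hx.
  rewrite pow1, Rmult_1_l.
  set (y := x ^ (j - 1)).
  assert (Hy : y <= x) by (apply pow_le_self; [lra|lia]).
  assert (Hy0 : 0 <= y) by (apply pow_le; lra).
  assert (H1 := exp_ineq1_le (- y)).
  assert (H2 : exp (- y) <= 1) by (rewrite <- exp_0; destruct (Req_dec y 0);
     [subst; rewrite H, Ropp_0; lra | left; apply exp_increasing; lra]).
  assert (H3 := exp_pos (- y)).
  eapply Rle_trans. apply pow_le_self; [lra|lia]. lra.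
Qed.

Lemma exp_le' (x y : R) : x <= y -> exp x <= exp y.
Proof. intros [H|H]. left; apply exp_increasing; exact H. subst; lra. Qed.

Lemma ln_ge0 (a : R) : 1 <= a -> 0 <= ln a.
Proof. intros [H|H]. rewrite <- ln_1. left; apply ln_increasing; lra. subst; rewrite ln_1; lra. Qed.

Theorem corollary2 (delta : R) (j : nat) (abar : R) :
  0 < delta < exp (-1) ->
  (* j = ceil(ln(1/delta)) *)
  INR j - 1 < ln (1 / delta) <= INR j ->
  is_alpha_bar j abar ->
  gamma0 j abar delta <= exp 1 * INR j.
Proof.
  intros [Hd1 Hd2] [Hj1 Hj2] [_ Hmax].
  assert (Hl : 1 < ln (1 / delta)).
  { assert (Hd3 : exp 1 < 1 / delta).
    { unfold Rdiv; rewrite Rmult_1_l.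
      replace (-1) with (- (1)) in Hd2 by ring. rewrite exp_Ropp in Hd2.
      assert (0 < exp 1) by apply exp_pos.
      apply Rinv_lt_contravar in Hd2. rewrite Rinv_inv in Hd2. lra.
      apply Rmult_lt_0_compat; auto. apply Rinv_0_lt_compat; auto. }
    rewrite <- (ln_exp 1) at 1. apply ln_increasing. apply exp_pos. exact Hd3. }
  assert (Hj : (2 <= j)%nat).
  { destruct j as [|[|j]]; simpl in Hj2; try lra. lia. }
  assert (Ha : 1 <= abar) by (apply Hmax, one_admissible, Hj).
  assert (HJ : 2 <= INR j) by (apply (le_INR 2); exact Hj).
  unfold gamma0, Rpower.
  assert (E1 : exp ((- (INR j - 1) / INR j) * ln abar) <= 1).
  { rewrite <- exp_0 at 2. apply exp_le'.
    assert (0 <= ln abar) by (apply ln_ge0; lra).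
    assert (- (INR j - 1) / INR j < 0).
    { unfold Rdiv. apply Rmult_neg_pos. lra. apply Rinv_0_lt_compat; lra. }
    nra. }
  assert (E2 : exp ((-1 / INR j) * ln delta) <= exp 1).
  { apply exp_le'.
    assert (Hln : ln (1/delta) = - ln delta).
    { unfold Rdiv; rewrite Rmult_1_l. apply ln_Rinv; auto. }
    assert (- ln delta <= INR j) by lra.
    replace ((-1 / INR j) * ln delta) with ((- ln delta) / INR j) by (field; lra).
    apply (Rmult_le_reg_r (INR j)). lra. unfold Rdiv.
    rewrite Rmult_assoc, Rinv_l by lra. lra. }
  assert (0 < exp ((- (INR j - 1) / INR j) * ln abar)) by apply exp_pos.
  assert (0 < exp ((-1 / INR j) * ln delta)) by apply exp_pos.
  set (A := exp (- (INR j - 1) / INR j * ln abar)) in *. set (B := exp (-1 / INR j * ln delta)) in *.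
  assert (A * B <= exp 1).
  { apply Rle_trans with (1 * B). apply Rmult_le_compat_r; lra. lra. }
  replace (A * INR j * B) with ((A * B) * INR j) by ring.
  apply Rmult_le_compat_r; lra.
Qed.
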